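(* Let $\mathfrak g=\mathfrak k\oplus\mathfrak m$ be a Pauli-spanned Cartan decomposition and let $b_1,\dots,b_d\in\tilde{\mathfrak m}$ be pairwise commuting Pauli strings. Let $i\neq j$ be indices and $R=\{r_1,r_2,\dots\}$ a list of indices disjoint from $\{i,j\}$. If $\tilde{\mathfrak k}^{ij}_{r_1r_2\dots}$ is non-empty, then $|\tilde{\mathfrak k}^i_{jr_1r_2\dots}|=|\tilde{\mathfrak k}^j_{ir_1r_2\dots}|$.
   Context: Pauli strings on $n$ qubits are tensor products of $I,X,Y,Z$, not all identity; two Pauli strings either commute or anticommute. A Pauli-spanned Cartan decomposition is $\mathfrak g=\mathfrak k\oplus\mathfrak m\subseteq\mathfrak{su}(2^n)$ with $\mathfrak k=\mathrm{span}_{i\mathbb R}\tilde{\mathfrak k}$, $\mathfrak m=\mathrm{span}_{i\mathbb R}\tilde{\mathfrak m}$, where $\tilde{\mathfrak k}\sqcup\tilde{\mathfrak m}$ is the set of all Pauli strings (up to phase) $\sigma$ with $i\sigma\in\mathfrak g$, and $[\mathfrak k,\mathfrak k]\subseteq\mathfrak k$, $[\mathfrak m,\mathfrak m]\subseteq\mathfrak k$, $[\mathfrak k,\mathfrak m]\subseteq\mathfrak m$. For disjoint index lists, $\tilde{\mathfrak k}^{i_1i_2\dots}_{j_1j_2\dots}$ is the set of $k\in\tilde{\mathfrak k}$ anticommuting with every $b_{i_p}$ and commuting with every $b_{j_q}$ (no condition on other indices). *)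

(* Defs.v *)
(* Pauli strings up to phase on n qubits, in the standard
   binary-symplectic encoding: each tensor factor is a pair (x-bit, z-bit)
   with I = (false,false), X = (true,false), Z = (false,true), Y = (true,true).
   Multiplication of Pauli strings up to phase is componentwise xor. *)
From mathcomp Require Import all_boot.
Set Implicit Arguments. Unset Strict Implicit. Unset Printing Implicit Defensive.

Definition pauli1 := (bool * bool)%type.
Definition pI : pauli1 := (false, false).
Definition pX : pauli1 := (true, false).
Definition pZ : pauli1 := (false, true).
Definition pY : pauli1 := (true, true).

Definition pstring (n : nat) := {ffun 'I_n -> pauli1}.

Definition nonid n (s : pstring n) : bool := [exists q, s q != pI].

Definition anti1 (a b : pauli1) : bool := [&& a != pI, b != pI & a != b].

Definition panticommute n (s t : pstring n) : bool :=
  odd #|[set q | anti1 (s q) (t q)]|.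
Definition pcommute n (s t : pstring n) : bool := ~~ panticommute s t.

Definition pmul1 (a b : pauli1) : pauli1 := (xorb a.1 b.1, xorb a.2 b.2).
Definition pmul n (s t : pstring n) : pstring n := [ffun q => pmul1 (s q) (t q)].

(* Pauli-spanned Cartan decomposition g = k (+) m, given by the disjoint sets
   kt, mt of Pauli strings (up to phase).  For Pauli strings, [i s, i t] = 0 if
   s,t pcommute and is a nonzero multiple of i (s t) otherwise; since Pauli
   strings are linearly independent, the bracket inclusions
   [k,k] <= k, [m,m] <= k, [k,m] <= m for the spans are equivalent to the
   closure conditions below. *)
Definition pauli_cartan n (kt mt : {set pstring n}) : Prop :=
  [/\ [disjoint kt & mt],
      (forall s, s \in kt -> nonid s) /\
      (forall s, s \in mt -> nonid s),
      (forall s t, s \in kt -> t \in kt -> panticommute s t -> pmul s t \in kt),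
      (forall s t, s \in mt -> t \in mt -> panticommute s t -> pmul s t \in kt) &
      (forall s t, s \in kt -> t \in mt -> panticommute s t -> pmul s t \in mt)].

(* ktilde^{A}_{C}: elements of kt anticommuting with every b_a (a in A) and
   commuting with every b_c (c in C) *)
Definition ksub n d (kt : {set pstring n}) (b : 'I_d -> pstring n)
  (A C : seq 'I_d) : {set pstring n} :=
  [set k in kt | all (fun a => panticommute k (b a)) A &&
                 all (fun c => pcommute k (b c)) C].

(* Main.v *)
Require Import Defs.
From mathcomp Require Import all_boot.
Set Implicit Arguments. Unset Strict Implicit. Unset Printing Implicit Defensive.

Lemma odd_card_xor (T : finType) (f g : pred T) :
  odd #|[set q | f q (+) g q]| = odd #|[set q | f q]| (+) odd #|[set q | g q]|.
Proof.
set X := [set q | f q (+) g q]; set A := [set q | f q]; set B := [set q | g q].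
have e1 := cardsID A X. have e2 := cardsID B A.
have e3 := cardsID A B.
have h1 : X :&: A = A :\: B.
  by apply/setP => q; rewrite !inE; case: (f q); case: (g q).
have h2 : X :\: A = B :\: A.
  by apply/setP => q; rewrite !inE; case: (f q); case: (g q).
rewrite h1 h2 in e1.
rewrite setIC in e2.
rewrite -e1 -e2 -e3 !oddD.
by case: (odd #|B :&: A|); case: (odd #|A :\: B|); case: (odd #|B :\: A|).
Qed.

Lemma anti1_mul a b c : anti1 (pmul1 a b) c = anti1 a c (+) anti1 b c.
Proof.
by case: a => [[] []]; case: b => [[] []]; case: c => [[] []].
Qed.

Lemma anti1C a b : anti1 a b = anti1 b a.
Proof. by case: a => [[] []]; case: b => [[] []]. Qed.

Lemma wmulL n (s t u : pstring n) :
  panticommute (pmul s t) u = panticommute s u (+) panticommute t u.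
Proof.
rewrite /panticommute -odd_card_xor; apply: congr1; apply: eq_card => q.
by rewrite !inE /pmul ffunE anti1_mul.
Qed.

Lemma wC n (s t : pstring n) : panticommute s t = panticommute t s.
Proof.
rewrite /panticommute; apply: congr1; apply: eq_card => q.
by rewrite !inE anti1C.
Qed.

Lemma wmulR n (s t u : pstring n) :
  panticommute u (pmul s t) = panticommute u s (+) panticommute u t.
Proof. by rewrite wC wmulL (wC s) (wC t). Qed.

Lemma ww n (s : pstring n) : panticommute s s = false.
Proof.
rewrite /panticommute.
suff -> : [set q | anti1 (s q) (s q)] = set0 by rewrite cards0.
by apply/setP => q; rewrite !inE; case: (s q) => [[] []].
Qed.

Section Main.
Variables (n d : nat) (kt mt : {set pstring n}) (b : 'I_d -> pstring n).
Hypothesis hC : pauli_cartan kt mt.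
Hypothesis hm : forall p, b p \in mt.
Hypothesis hcomm : forall p q, pcommute (b p) (b q).

Lemma key (i j : 'I_d) (R : seq 'I_d) k0 :
  k0 \in ksub kt b [:: i; j] R ->
  #|ksub kt b [:: i] (j :: R)| <= #|ksub kt b [:: j] (i :: R)|.
Proof.
case: hC => _ _ r3 r4 r5.
rewrite inE /= !andbT => /andP [k0k /andP [/andP [k0i k0j] k0R]].
pose h x := if panticommute x k0 then pmul x k0
            else pmul (pmul k0 (pmul x (b i))) (b j).
have bc p q : panticommute (b p) (b q) = false.
  by have := hcomm p q; rewrite /pcommute; case: panticommute.
have hh : cancel h h.
  move=> x; rewrite /h.
  case ex: (panticommute x k0).
    rewrite wmulL ww ex /=.
    by apply/ffunP => q; rewrite /pmul !ffunE /=;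
      case: (x q) => [[] []]; case: (k0 q) => [[] []].
  rewrite !wmulL ww ex (wC (b i)) k0i (wC (b j)) k0j /=.
  by apply/ffunP => q; rewrite /pmul !ffunE /=;
    case: (x q) => [[] []]; case: (k0 q) => [[] []];
    case: (b i q) => [[] []]; case: (b j q) => [[] []].
rewrite -(card_imset _ (can_inj hh)).
apply: subset_leq_card; apply/subsetP => y /imsetP [x].
rewrite inE /= !andbT => /andP [xk /andP [xi /andP [xj xR]]] ->.
have Rc y' : all (fun c => pcommute y' (b c)) R =
   all (fun c => ~~ panticommute y' (b c)) R by [].
rewrite Rc in xR k0R.
rewrite /h; case ex: (panticommute x k0).
- rewrite inE /= !andbT /pcommute !wmulL.
  rewrite (negbTE xj) k0j xi k0i /=.
  rewrite r3 //=.
  apply/allP => r rR; rewrite wmulL.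
  by rewrite (negbTE (allP xR r rR)) (negbTE (allP k0R r rR)).
- rewrite inE /= !andbT /pcommute !wmulL.
  rewrite (negbTE xj) k0j xi k0i !bc /=.
  have m1 : pmul x (b i) \in mt by apply: r5.
  have m2 : pmul k0 (pmul x (b i)) \in mt.
    by apply: r5 => //; rewrite wmulR (wC k0) ex k0i.
  rewrite r4 //=; last by rewrite !wmulL k0j (negbTE xj) bc.
  apply/allP => r rR; rewrite !wmulL !bc.
  by rewrite (negbTE (allP xR r rR)) (negbTE (allP k0R r rR)).
Qed.
End Main.

Theorem corollaryC3 (n d : nat) (kt mt : {set pstring n})
  (b : 'I_d -> pstring n) (i j : 'I_d) (R : seq 'I_d) :
  pauli_cartan kt mt ->
  (forall p, b p \in mt) ->
  (forall p q, pcommute (b p) (b q)) ->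
  i != j -> i \notin R -> j \notin R ->
  ksub kt b [:: i; j] R != set0 ->
  #|ksub kt b [:: i] (j :: R)| = #|ksub kt b [:: j] (i :: R)|.
Proof.
move=> hC hm hc _ _ _ /set0Pn [k0 hk0].
have hk0' : k0 \in ksub kt b [:: j; i] R.
  by move: hk0; rewrite !inE /= !andbT; case: (panticommute k0 (b i));
     case: (panticommute k0 (b j)); rewrite ?andbF.
apply/eqP; rewrite eqn_leq.
by rewrite (key hC hm hc hk0) (key hC hm hc hk0').
Qed.
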